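(* Fix $1<s<3/2$ and $z\in\mathbb{D}$, and for $N\ge1$ let \[ J_{N,1}=\int_{\mathcal{U}_N(z)}T_z(x_1)^{4s}K(x_1,x_1)^3\,\mathrm{d}\mu(x_1). \] There exists $c_1(s)>0$ such that for all large enough $N$, \[ |J_{N,1}|\le c_1(s)\frac{(1+|z|)^4}{(1-|z|)^4}e^{(3-2s)N}. \]
   Context: $\mathbb{D}$ is the open unit disk, $\mathrm{d}\mu=\frac{1}{\pi}\mathrm{d}x\,\mathrm{d}y$, $K(z,w)=(1-z\overline{w})^{-2}$. $\varphi_z(x)=\frac{z-x}{1-\overline{z}x}$, $d_{\mathrm{h}}(z,x)=\log\frac{1+|\varphi_z(x)|}{1-|\varphi_z(x)|}$, $T_z(x)=e^{-d_{\mathrm{h}}(z,x)}=\frac{1-|\varphi_z(x)|}{1+|\varphi_z(x)|}$, and $\mathcal{U}_N(z)=\{x\in\mathbb{D}:d_{\mathrm{h}}(z,x)<N\}$. *)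

(* Defs.v *)
(* The complex plane is modelled as R * R
   (x = (Re x, Im x)), with the Lebesgue measure on R^2 given by the
   product measure lebesgue_measure \x lebesgue_measure. *)
From HB Require Import structures.
From mathcomp Require Import all_boot all_order all_algebra.
From mathcomp Require Import all_classical all_reals all_analysis.
Set Implicit Arguments. Unset Strict Implicit. Unset Printing Implicit Defensive.
Import Order.TTheory GRing.Theory Num.Theory.
Local Open Scope classical_set_scope.
Local Open Scope ring_scope.

Section Disk.
Variable R : realType.
Definition cpx := (R * R)%type.

Definition csub (u v : cpx) : cpx := (u.1 - v.1, u.2 - v.2).
Definition cmul (u v : cpx) : cpx := (u.1 * v.1 - u.2 * v.2, u.1 * v.2 + u.2 * v.1).
Definition cconj (u : cpx) : cpx := (u.1, - u.2).
Definition cone : cpx := (1, 0).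
Definition cabs (u : cpx) : R := Num.sqrt (u.1 ^+ 2 + u.2 ^+ 2).
Definition cinv (u : cpx) : cpx :=
  (u.1 / (u.1 ^+ 2 + u.2 ^+ 2), - u.2 / (u.1 ^+ 2 + u.2 ^+ 2)).
Definition cdiv (u v : cpx) : cpx := cmul u (cinv v).

Definition disk : set cpx := [set x | cabs x < 1].

Definition phi (z x : cpx) : cpx := cdiv (csub z x) (csub cone (cmul (cconj z) x)).

Definition dh (z x : cpx) : R := ln ((1 + cabs (phi z x)) / (1 - cabs (phi z x))).

Definition Tz (z x : cpx) : R := (1 - cabs (phi z x)) / (1 + cabs (phi z x)).

Definition Kb (z w : cpx) : cpx :=
  let u := cinv (csub cone (cmul z (cconj w))) in cmul u u.

Definition UN (N : R) (z : cpx) : set cpx := [set x | disk x /\ dh z x < N].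

Definition leb2 := ((@lebesgue_measure R) \x (@lebesgue_measure R))%E.

(* J_{N,1} = int_{U_N(z)} T_z(x)^{4s} K(x,x)^3 dmu(x).  K(x,x) is real
   (= (1-|x|^2)^{-2}); we use its real part. The integrand is >= 0, so the
   integral is taken in the extended reals. *)
Definition JN1 (s N : R) (z : cpx) : \bar R :=
  ((pi^-1)%:E * \int[leb2]_(x in UN N z) ((Tz z x) `^ (4 * s) * ((Kb x x).1) ^+ 3)%:E)%E.

End Disk.

(* Main.v *)
Require Import Defs.
From HB Require Import structures.
From mathcomp Require Import all_boot all_order all_algebra.
From mathcomp Require Import all_classical all_reals all_analysis.
From mathcomp Require Import ring lra.
From mathcomp Require Import measurable_realfun.
Import Order.TTheory GRing.Theory Num.Theory.
Local Open Scope ring_scope.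
Local Open Scope classical_set_scope.

Lemma le_int_nm (d : measure_display) (T : measurableType d) (R : realType)
  (mu : measure T R) (f g : T -> \bar R) :
  (forall x, (0 <= f x)%E) -> (forall x, (f x <= g x)%E) ->
  (\int[mu]_x f x <= \int[mu]_x g x)%E.
Proof.
move=> f0 fg.
have g0 : forall x, (0 <= g x)%E by move=> x; exact: le_trans (f0 x) (fg x).
rewrite (ge0_integralTE mu f0) (ge0_integralTE mu g0).
apply: le_ereal_sup => _ [h hf <-]; exists h => //= x.
exact: le_trans (hf x) (fg x).
Qed.


Section Aux.
Variable R : realType.


Definition Fpr (c r : R) (y : R) := ((c + y) `^ (1 - r) - (c - y) `^ (1 - r)) / (1 - r).
Definition fpr (c r : R) (y : R) := (c - y) `^ (- r) + (c + y) `^ (- r).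

Lemma dplus (c a y : R) : 0 < c + y ->
  is_derive y 1 (fun t => (c + t) `^ a) (a * (c + y) `^ (a - 1)).
Proof.
move=> h.
have H1 : is_derive y 1 (fun t : R => c + t) 1.
  have := @is_deriveD R R R (cst c) id y 1 0 1 _ _.
  by rewrite add0r; apply.
have := @is_derive1_comp R (fun t => t `^ a) (fun t => c + t) y _ _ (is_derive1_powR a h) H1.
by rewrite mulr1.
Qed.

Lemma dminus (c a y : R) : 0 < c - y ->
  is_derive y 1 (fun t => (c - t) `^ a) (- (a * (c - y) `^ (a - 1))).
Proof.
move=> h.
have H1 : is_derive y 1 (fun t : R => c - t) (-1).
  have := @is_deriveB R R R (cst c) id y 1 0 1 _ _.
  by rewrite sub0r; apply.
have := @is_derive1_comp R (fun t => t `^ a) (fun t => c - t) y _ _ (is_derive1_powR a h) H1.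
by rewrite mulrN1.
Qed.

Lemma dF (c r y : R) : r < 1 -> -c < y < c ->
  is_derive y 1 (Fpr c r) (fpr c r y).
Proof.
move=> r1 /andP[h1 h2].
have p1 : 0 < c + y by rewrite -ltrBlDl sub0r.
have p2 : 0 < c - y by rewrite subr_gt0.
have := is_deriveB (@dplus c (1 - r) y p1) (@dminus c (1 - r) y p2).
move=> HB.
have := is_deriveZ ((1 - r)^-1) HB.
rewrite /Fpr /fpr => HZ.
have -> : (fun y0 => ((c + y0) `^ (1 - r) - (c - y0) `^ (1 - r)) / (1 - r)) =
   ((1 - r)^-1 *: (fun t => (c + t) `^ (1 - r) - (c - t) `^ (1 - r))).
  by apply/funext => t /=; rewrite mulrC.
have r1' : 1 - r != 0 by rewrite subr_eq0 eq_sym lt_eqF.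
have E : (1 - r)^-1 *: ((1 - r) * (c + y) `^ (1 - r - 1) - - ((1 - r) * (c - y) `^ (1 - r - 1)))
   = (c - y) `^ (- r) + (c + y) `^ (- r).
  rewrite opprK /GRing.scale /= mulrDr !mulrA mulVf // !mul1r.
  by rewrite addrAC subrr add0r addrC.
by rewrite -E.
Qed.


Lemma fpr_ge0 (c r y : R) : 0 <= fpr c r y.
Proof. by rewrite /fpr addr_ge0 // powR_ge0. Qed.

Lemma der_f (c r k y : R) : -c < y < c -> derivable (fun t => k * fpr c r t) y 1.
Proof.
move=> /andP[h1 h2].
have p1 : 0 < c + y by rewrite -ltrBlDl sub0r.
have p2 : 0 < c - y by rewrite subr_gt0.
have H := is_deriveZ k (is_deriveD (@dminus c (- r) y p2) (@dplus c (- r) y p1)).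
have -> : (fun t => k * fpr c r t) = k \*: ((fun t => (c - t) `^ (- r)) + (fun t => (c + t) `^ (- r))).
  by apply/funext => t.
exact: (@ex_derive _ _ _ _ _ _ _ H).
Qed.

Lemma der_F (c r k y : R) : r < 1 -> -c < y < c ->
  is_derive y 1 (fun t => k * Fpr c r t) (k * fpr c r y).
Proof.
move=> r1 hy.
have H := is_deriveZ k (@dF c r y r1 hy).
have -> : (fun t => k * Fpr c r t) = k \*: (Fpr c r) by apply/funext => t.
exact: H.
Qed.

Lemma int1D (c b r k : R) : 0 < b -> b < c -> 0 < r -> r < 1 -> 0 <= k ->
 (\int[lebesgue_measure]_(y in `](- b)%R, b[) (k * fpr c r y)%:E <=
   (k * (2 * (2 * c) `^ (1 - r) / (1 - r)))%:E)%E.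
Proof.
move=> b0 bc r0 r1 k0.
have inI : forall y, y \in `[(- b)%R, b]%R -> -c < y < c.
  move=> y; rewrite in_itv /= => /andP[h1 h2]; apply/andP; split.
    by apply: lt_le_trans h1; rewrite ltrN2.
  exact: le_lt_trans h2 bc.
have nb : -b < b by rewrite -subr_gt0 opprK -mulr2n mulrn_wgt0.
apply: (@le_trans _ _ (\int[lebesgue_measure]_(y in `[(- b)%R, b]) (k * fpr c r y)%:E)%E).
  rewrite [X in (X <= _)%E]integral_mkcond [X in (_ <= X)%E]integral_mkcond.
  apply: le_int_nm => x.
    by rewrite patchE; case: ifP => // _; rewrite lee_fin mulr_ge0 // fpr_ge0.
  rewrite !patchE; case: ifP => hx.
    rewrite ifT //; move: hx; rewrite !inE /= !in_itv /= => /andP[h1 h2].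
    by rewrite (ltW h1) (ltW h2).
  by case: ifP => _ //; rewrite lee_fin mulr_ge0 // fpr_ge0.
have dFall : {in `[(- b)%R, b]%R, forall x, derivable (fun t => k * Fpr c r t) x 1}.
  move=> y hy.
  exact: (@ex_derive _ _ _ _ _ _ _ (@der_F c r k y r1 (inI y hy))).
have cF := derivable_within_continuous dFall.
have dfall : {in `[(- b)%R, b]%R, forall x, derivable (fun t => k * fpr c r t) x 1}.
  move=> y hy; exact: (@der_f c r k y (inI y hy)).
have cf := derivable_within_continuous dfall.
rewrite (continuous_FTC2 nb cf (F := fun t => k * Fpr c r t)); last 2 first.
- have [_ Ha Hb] := (continuous_within_itvP _ nb).1 cF.
  split => //.
  move=> y; rewrite in_itv /= => /andP[h1 h2]; apply: dFall.
  by rewrite in_itv /= (ltW h1) (ltW h2).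
- move=> y; rewrite in_itv /= => /andP[h1 h2].
  rewrite derive1E.
  have hy : y \in `[(- b)%R, b]%R by rewrite in_itv /= (ltW h1) (ltW h2).
  by have [_ ->] := @der_F c r k y r1 (inI y hy).
rewrite -EFinD lee_fin.
rewrite /Fpr opprK.
have r1' : 0 < 1 - r by rewrite subr_gt0.
set P := (c + b) `^ (1 - r); set Q := (c - b) `^ (1 - r).
have Q0 : 0 <= Q by rewrite powR_ge0.
have PC : P <= (2 * c) `^ (1 - r).
  apply: ge0_ler_powR; first exact: ltW.
  - by rewrite nnegrE addr_ge0 // ltW // (lt_trans b0 bc).
  - by rewrite nnegrE mulr_ge0 // ltW // (lt_trans b0 bc).
  by rewrite mulr2n mulrDl mul1r lerD2l ltW.
rewrite -mulrBr; apply: ler_wpM2l => //.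
rewrite -mulrBl; apply: ler_wpM2r; first by rewrite invr_ge0 ltW.
lra.
Qed.

Lemma powN_le (u v e : R) : 0 < u -> u <= v -> 0 <= e -> v `^ (- e) <= u `^ (- e).
Proof.
move=> u0 uv e0; rewrite !powRN.
have v0 : 0 < v by apply: lt_le_trans uv.
rewrite lef_pV2 ?posrE ?powR_gt0 //.
by apply: ge0_ler_powR => //; rewrite nnegrE ltW.
Qed.

Lemma P1 (t y q : R) : 0 < t -> -t < y < t -> 0 <= q ->
  (t ^+ 2 - y ^+ 2) `^ (- q) <= t `^ (- q) * fpr t q y.
Proof.
move=> t0 /andP[h1 h2] q0.
have u0 : 0 < t - y by rewrite subr_gt0.
have v0 : 0 < t + y by lra.
have E : t ^+ 2 - y ^+ 2 = (t - y) * (t + y) by rewrite !expr2; ring.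
rewrite E /fpr.
have [y0|y0] := leP 0 y.
  have : ((t - y) * (t + y)) `^ (- q) <= ((t - y) * t) `^ (- q).
    apply: powN_le => //; first exact: mulr_gt0.
    by apply: ler_wpM2l; [exact: ltW | lra].
  rewrite [X in _ <= X]powRM ?(ltW u0) ?(ltW t0) // => h; apply: (le_trans h).
  rewrite mulrC; apply: ler_wpM2l; first exact: powR_ge0.
  by rewrite lerDl powR_ge0.
have : ((t - y) * (t + y)) `^ (- q) <= (t * (t + y)) `^ (- q).
  apply: powN_le => //; first exact: mulr_gt0.
  by apply: ler_wpM2r; [exact: ltW | lra].
rewrite [X in _ <= X]powRM ?(ltW v0) ?(ltW t0) // => h; apply: (le_trans h).
apply: ler_wpM2l; first exact: powR_ge0.
by rewrite lerDr powR_ge0.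
Qed.

Lemma P2 (t q : R) : 0 < t -> t <= 1 -> 0 < q -> q < 1 ->
  t `^ (- q) * (2 * (2 * t) `^ (1 - q) / (1 - q)) <= 4 / (1 - q) * t^-1.
Proof.
move=> t0 t1 q0 q1.
rewrite powRM ?(ltW t0) //.
have E : t `^ (- q) * (2 * (2 `^ (1 - q) * t `^ (1 - q)) / (1 - q))
   = (2 * 2 `^ (1 - q)) / (1 - q) * (t `^ (- q) * t `^ (1 - q)) by ring.
rewrite E -powRD; last by apply/implyP => _; rewrite gt_eqF.
have h1 : t `^ (- q + (1 - q)) <= t^-1.
  rewrite -powR_inv1 ?(ltW t0) //; apply: ger_powR; first by rewrite t0 t1.
  lra.
have h2 : 2 `^ (1 - q) <= 2.
  have := @ler_powR _ 2 _ (1 - q) 1; rewrite powRr1 //; apply => //; lra.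
have iq : 0 < (1 - q)^-1 by rewrite invr_gt0 subr_gt0.
have h3 : 0 <= t `^ (- q + (1 - q)) by exact: powR_ge0.
have h4 : 0 <= 2 `^ (1 - q) by exact: powR_ge0.
set A := t `^ (- q + (1 - q)) in h1 h3 *.
set B := 2 `^ (1 - q) in h2 h4 *.
set C := (1 - q)^-1 in iq *.
have -> : 4 = 2 * 2 :> R by rewrite -natrM.
have ti : 0 < t^-1 by rewrite invr_gt0.
have -> : 2 * B * C * A = (2 * C) * (B * A) by ring.
have -> : 2 * 2 * C / t = (2 * C) * (2 * t^-1) by ring.
apply: ler_wpM2l; first by rewrite mulr_ge0 // ltW.
apply: (le_trans (ler_wpM2l h4 h1)).
by apply: ler_wpM2r => //; exact: ltW.
Qed.

Lemma powNh (a : R) : 0 < a -> a `^ (- 2^-1) = (Num.sqrt a)^-1.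
Proof. by move=> a0; rewrite powRN powR12_sqrt // ltW. Qed.

Lemma P3 (x : R) : -1 < x < 1 -> (Num.sqrt (1 - x ^+ 2))^-1 <= fpr 1 (2^-1) x.
Proof.
move=> /andP[h1 h2].
have u0 : 0 < 1 - x by lra.
have v0 : 0 < 1 + x by lra.
have A0 : 0 < 1 - x ^+ 2 by rewrite expr2; nra.
rewrite /fpr !powNh //.
have su := sqrtr_gt0 (1 - x); rewrite u0 in su.
have sv := sqrtr_gt0 (1 + x); rewrite v0 in sv.
have sA := sqrtr_gt0 (1 - x ^+ 2); rewrite A0 in sA.
have [x0|x0] := leP 0 x.
  have : (Num.sqrt (1 - x ^+ 2))^-1 <= (Num.sqrt (1 - x))^-1.
    rewrite lef_pV2 ?posrE // ler_sqrt; last exact: ltW.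
    rewrite expr2; nra.
  move=> h; apply: (le_trans h); rewrite lerDl ltW // invr_gt0 //.
have : (Num.sqrt (1 - x ^+ 2))^-1 <= (Num.sqrt (1 + x))^-1.
  rewrite lef_pV2 ?posrE // ler_sqrt; last exact: ltW.
  rewrite expr2; nra.
move=> h; apply: (le_trans h); rewrite lerDr ltW // invr_gt0 //.
Qed.


Definition wq (x : R * R) : R := 1 - x.1 ^+ 2 - x.2 ^+ 2.
Definition Gd (dl q : R) (x : R * R) : \bar R :=
  (if dl < wq x then (wq x) `^ (- q) else 0)%:E.
Definition Hd (dl q : R) (x : R) : \bar R :=
  (if dl < 1 - x ^+ 2 then 4 / (1 - q) * fpr 1 (2^-1) x else 0)%:E.

Lemma mwq : measurable_fun setT wq.
Proof.
apply: measurable_realfun.measurable_funB; last exact: measurable_realfun.measurable_funX measurable_snd.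
apply: measurable_realfun.measurable_funB; first exact: measurable_cst.
exact: measurable_realfun.measurable_funX measurable_fst.
Qed.

Lemma mGd (dl q : R) : measurable_fun [set: (R * R)%type] (Gd dl q : R * R -> \bar R).
Proof.
apply/measurable_EFinP.
have H1 : measurable_fun [set: (R * R)%type] (fun x : R * R => dl < wq x).
  exact: (measurable_fun_ltr (measurable_cst dl) (@mwq)).
have H2 : measurable_fun [set: (R * R)%type] (fun x : R * R => wq x `^ (- q)).
  exact: (measurableT_comp (measurable_powR (- q)) (@mwq)).
have H3 : measurable_fun [set: (R * R)%type] (fun x : R * R => (0 : R)).
  exact: measurable_cst.
exact: (measurable_fun_ifT H1 H2 H3).
Qed.

Lemma Gd_ge0 (dl q : R) x : (0 <= Gd dl q x)%E.
Proof. by rewrite /Gd lee_fin; case: ifP => // _; exact: powR_ge0. Qed.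


Lemma inner (dl q x1 : R) : 0 < dl -> 0 < q -> q < 1 ->
  (\int[lebesgue_measure]_y Gd dl q (x1, y) <= Hd dl q x1)%E.
Proof.
move=> dl0 q0 q1.
rewrite /Hd; case: ifPn => hA; last first.
  rewrite integral0_eq // => y _.
  rewrite /Gd /wq /=; case: ifPn => // h; exfalso; move/negP: hA; apply.
  by apply: (lt_le_trans h); rewrite lerBlDr lerDl sqr_ge0.
set A := 1 - x1 ^+ 2 in hA *.
have A0 : 0 < A by exact: lt_trans hA.
have A1 : A <= 1 by rewrite /A lerBlDr lerDl sqr_ge0.
have Ad : 0 < A - dl by rewrite subr_gt0.
set t := Num.sqrt A; set b := Num.sqrt (A - dl).
have t0 : 0 < t by rewrite sqrtr_gt0.
have b0 : 0 < b by rewrite sqrtr_gt0.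
have bt : b < t by rewrite /b /t ltr_sqrt // ltrBlDr ltrDl.
have t1 : t <= 1 by rewrite /t -sqrtr1 ler_sqrt.
have t2 : t ^+ 2 = A by rewrite /t sqr_sqrtr // ltW.
apply: (@le_trans _ _ (\int[lebesgue_measure]_(y in `](- b)%R, b[)
                          (t `^ (- q) * fpr t q y)%:E)%E).
  rewrite [X in (_ <= X)%E]integral_mkcond.
  apply: le_int_nm => y; first exact: Gd_ge0.
  rewrite /Gd /wq /= patchE; case: ifPn => h; last first.
    by case: ifP => // _; rewrite lee_fin mulr_ge0 ?powR_ge0 ?fpr_ge0.
  have hy : y ^+ 2 < A - dl by rewrite ltrBrDl addrC -ltrBrDl.
  have yb : `|y| < b by rewrite /b -sqrtr_sqr ltr_sqrt.
  move: yb; rewrite ltr_norml => /andP[yb1 yb2].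
  rewrite ifT; last by rewrite inE /= in_itv /= yb1 yb2.
  rewrite lee_fin.
  have -> : 1 - x1 ^+ 2 - y ^+ 2 = t ^+ 2 - y ^+ 2 by rewrite t2.
  apply: P1 => //; last exact: ltW.
  apply/andP; split; last exact: lt_trans yb2 bt.
  by apply: lt_trans yb1; rewrite ltrN2.
apply: le_trans (int1D t b q (t `^ (- q)) b0 bt q0 q1 (powR_ge0 _ _)) _.
rewrite lee_fin.
apply: le_trans (P2 t q t0 t1 q0 q1) _.
apply: ler_wpM2l; first by rewrite divr_ge0 // subr_ge0 ltW.
apply: P3.
have hx : x1 ^+ 2 < 1 by rewrite -subr_gt0.
have : `|x1| < 1 by rewrite -sqrtr_sqr -sqrtr1 ltr_sqrt.
by rewrite ltr_norml.
Qed.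


Definition Cq (q : R) := 4 / (1 - q) * (2 * (2 * 1) `^ (1 - 2^-1) / (1 - 2^-1)).

Lemma Cq_ge0 (q : R) : q < 1 -> 0 <= Cq q.
Proof.
move=> q1; have h : 0 <= 1 - q by rewrite subr_ge0 ltW.
have h2 : 0 <= 1 - 2^-1 :> R by rewrite subr_ge0 invf_le1 // ler1n.
by rewrite /Cq mulr_ge0 // ?divr_ge0 // mulr_ge0 // powR_ge0.
Qed.

Lemma intG (dl q : R) : 0 < dl -> 0 < q -> q < 1 ->
  (\int[(@lebesgue_measure R \x @lebesgue_measure R)%E]_x Gd dl q x <= (Cq q)%:E)%E.
Proof.
move=> dl0 q0 q1.
rewrite (@fubini_tonelli1 _ _ _ _ _ (@lebesgue_measure R) (@lebesgue_measure R) (Gd dl q) (mGd dl q) (Gd_ge0 dl q)).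
apply: (@le_trans _ _ (\int[lebesgue_measure]_x Hd dl q x)%E).
  apply: le_int_nm => x; first by apply: integral_ge0 => y _; exact: Gd_ge0.
  exact: inner.
have [dl1|dl1] := ltP dl 1; last first.
  rewrite integral0_eq; first by rewrite lee_fin Cq_ge0.
  move=> x _; rewrite /Hd ifF //; apply/negbTE; rewrite -leNgt.
  by apply: le_trans dl1; rewrite lerBlDr lerDl sqr_ge0.
set b := Num.sqrt (1 - dl).
have d1 : 0 < 1 - dl by rewrite subr_gt0.
have b0 : 0 < b by rewrite sqrtr_gt0.
have b1 : b < 1.
  have : Num.sqrt (1 - dl) < Num.sqrt 1 by rewrite ltr_sqrt //; lra.
  by rewrite sqrtr1.
apply: (@le_trans _ _ (\int[lebesgue_measure]_(y in `](- b)%R, b[)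
                          (4 / (1 - q) * fpr 1 (2^-1) y)%:E)%E).
  rewrite [X in (_ <= X)%E]integral_mkcond.
  apply: le_int_nm => y.
    rewrite /Hd lee_fin; case: ifP => // _.
    by rewrite mulr_ge0 ?fpr_ge0 // divr_ge0 // subr_ge0 ltW.
  rewrite /Hd patchE; case: ifPn => h; last first.
    by case: ifP => // _; rewrite lee_fin mulr_ge0 ?fpr_ge0 // divr_ge0 // subr_ge0 ltW.
  have hy : y ^+ 2 < 1 - dl by rewrite ltrBrDl addrC -ltrBrDl.
  have yb : `|y| < b by rewrite /b -sqrtr_sqr ltr_sqrt.
  move: yb; rewrite ltr_norml => /andP[yb1 yb2].
  by rewrite ifT // inE /= in_itv /= yb1 yb2.
have h2 : 0 < 2^-1 :> R by rewrite invr_gt0.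
have h21 : 2^-1 < 1 :> R by rewrite invf_lt1 // ltr1n.
apply: le_trans (int1D 1 b (2^-1) (4 / (1 - q)) b0 b1 h2 h21 _) _.
  by rewrite divr_ge0 // subr_ge0 ltW.
by rewrite /Cq.
Qed.


Lemma Kb1 (x : cpx R) : (Kb x x).1 = (wq x)^-1 ^+ 2.
Proof.
case: x => x1 x2; rewrite /Kb /cmul /cinv /csub /cconj /cone /wq /=.
have -> : 0 - (x1 * - x2 + x2 * x1) = 0 by ring.
have -> : 1 - (x1 * x1 - x2 * - x2) = 1 - x1 ^+ 2 - x2 ^+ 2 by ring.
set W := 1 - x1 ^+ 2 - x2 ^+ 2.
rewrite oppr0 mul0r mulr0 subr0 expr0n /= addr0.
have [->|W0] := eqVneq W 0; first by rewrite !mul0r invr0 expr0n /=.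
by field.
Qed.

Lemma Kb1_ge0 (x : cpx R) : 0 <= (Kb x x).1.
Proof. by rewrite Kb1 sqr_ge0. Qed.


Lemma phi_est (z x : cpx R) : cabs z < 1 -> cabs x < 1 ->
  0 <= cabs (phi z x) < 1 /\
  1 - cabs (phi z x) <= (1 + cabs z) / (1 - cabs z) * wq x.
Proof.
case: z => z1 z2; case: x => x1 x2 ha hb.
have a0 : 0 <= cabs (z1, z2) by exact: sqrtr_ge0.
have b0 : 0 <= cabs (x1, x2) by exact: sqrtr_ge0.
have a2 : cabs (z1, z2) ^+ 2 = z1 ^+ 2 + z2 ^+ 2 by rewrite sqr_sqrtr // addr_ge0 // sqr_ge0.
have b2 : cabs (x1, x2) ^+ 2 = x1 ^+ 2 + x2 ^+ 2 by rewrite sqr_sqrtr // addr_ge0 // sqr_ge0.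
move: ha hb a0 b0 a2 b2.
set a := cabs (z1, z2); set bx := cabs (x1, x2) => ha hb a0 b0 a2 b2.
rewrite /phi /cdiv /cmul /cinv /csub /cconj /cone /wq /=.
set D1 := 1 - (z1 * x1 - - z2 * x2).
set D2 := 0 - (z1 * x2 + - z2 * x1).
set S := D1 ^+ 2 + D2 ^+ 2.
have lag : (z1 * x1 + z2 * x2) ^+ 2 + (z1 * x2 - z2 * x1) ^+ 2 = a ^+ 2 * bx ^+ 2.
  by rewrite a2 b2; ring.
have Re : z1 * x1 + z2 * x2 <= a * bx.
  have h : (z1 * x1 + z2 * x2) ^+ 2 <= (a * bx) ^+ 2.
    by rewrite exprMn -lag lerDl sqr_ge0.
  have ab0 : 0 <= a * bx by exact: mulr_ge0.
  nra.
have SE : S = 1 - 2 * (z1 * x1 + z2 * x2) + a ^+ 2 * bx ^+ 2.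
  by rewrite -lag /S /D1 /D2; ring.
have Sge : (1 - a) ^+ 2 <= S.
  rewrite SE.
  have h1 : 1 - a <= 1 - a * bx by nra.
  have h2 : 0 <= 1 - a by rewrite subr_ge0 ltW.
  nra.
have S0 : 0 < S by apply: lt_le_trans Sge; rewrite exprn_gt0 // subr_gt0.
have iden : S - ((z1 - x1) ^+ 2 + (z2 - x2) ^+ 2) = (1 - a ^+ 2) * (1 - bx ^+ 2).
  by rewrite SE a2 b2; ring.
set rho := cabs _.
have r0 : 0 <= rho by exact: sqrtr_ge0.
set n := (z1 - x1) ^+ 2 + (z2 - x2) ^+ 2.
have Sn0 : S != 0 by rewrite gt_eqF.
have r2 : rho ^+ 2 = n / S.
  rewrite /rho /cabs sqr_sqrtr /=; last by rewrite addr_ge0 // sqr_ge0.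
  rewrite /n; move: Sn0; rewrite /S => Sn0; field.
  done.
have om : 1 - rho ^+ 2 = (1 - a ^+ 2) * (1 - bx ^+ 2) / S.
  by rewrite r2 -iden mulrBl divff.
have a21 : 0 < 1 - a ^+ 2 by nra.
have b21 : 0 < 1 - bx ^+ 2 by nra.
have pos : 0 < 1 - rho ^+ 2 by rewrite om divr_gt0 // mulr_gt0.
have r1 : rho < 1 by nra.
split; first by rewrite r0 r1.
have h1 : 1 - rho <= 1 - rho ^+ 2 by nra.
apply: (le_trans h1); rewrite om.
have w : 1 - x1 ^+ 2 - x2 ^+ 2 = 1 - bx ^+ 2 by rewrite b2; ring.
rewrite w.
have a1 : 0 < 1 - a by rewrite subr_gt0.
have -> : (1 + a) / (1 - a) * (1 - bx ^+ 2) = (1 - a ^+ 2) * (1 - bx ^+ 2) / (1 - a) ^+ 2.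
  by field; rewrite gt_eqF.
apply: ler_wpM2l; first by rewrite mulr_ge0 // ltW.
by rewrite lef_pV2 // posrE exprn_gt0.
Qed.

Lemma T_est (z x : cpx R) (N : R) : cabs z < 1 -> UN N z x ->
  [/\ 0 <= Tz z x, Tz z x <= (1 + cabs z) / (1 - cabs z) * wq x &
      (expR N)^-1 < Tz z x].
Proof.
move=> hz [hx hd].
have [/andP[r0 r1] hb] := phi_est z x hz hx.
move: hd hb r0 r1; rewrite /dh /Tz; set rho := cabs (phi z x) => hd hb r0 r1.
have p1 : 0 < 1 - rho by rewrite subr_gt0.
have p2 : 0 < 1 + rho by lra.
have T0 : 0 <= (1 - rho) / (1 + rho) by rewrite divr_ge0 // ltW.
split => //.
  apply: le_trans hb.
  rewrite ler_pdivrMr //; rewrite -subr_ge0; nra.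
have Y0 : 0 < (1 + rho) / (1 - rho) by rewrite divr_gt0.
have hY : (1 + rho) / (1 - rho) < expR N.
  by rewrite -(lnK (x := (1 + rho) / (1 - rho))) ?posrE // ltr_expR.
rewrite -invf_div ltf_pV2 ?posrE ?expR_gt0 //.
Qed.


Lemma K3 (x : cpx R) : 0 < wq x -> ((Kb x x).1) ^+ 3 = wq x `^ (- 6).
Proof.
move=> w0; rewrite Kb1 -exprM powR_invn ?ltW // exprVn //.
Qed.

Lemma integrand_bd (s q N : R) (z x : cpx R) : cabs z < 1 -> UN N z x ->
  0 < s -> 0 < q -> q <= 6 - 4 * s ->
  let Cz := (1 + cabs z) / (1 - cabs z) in
  ((Cz * expR N)^-1 < wq x) /\
  (Tz z x) `^ (4 * s) * ((Kb x x).1) ^+ 3 <=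
    (Cz `^ (4 * s) * (Cz * expR N) `^ (6 - 4 * s - q)) * (wq x) `^ (- q).
Proof.
move=> hz hU s0 q0 qp Cz.
have [T0 Tle Tgt] := T_est z x N hz hU.
have a0 : 0 <= cabs z by exact: sqrtr_ge0.
have Cz0 : 0 < Cz by rewrite /Cz divr_gt0 // ?subr_gt0 //; lra.
set w := wq x in Tle *.
have eN : 0 < expR N := expR_gt0 N.
have ieN : 0 < (expR N)^-1 by rewrite invr_gt0.
have Czw : (expR N)^-1 < Cz * w by apply: lt_le_trans Tle.
have w0 : 0 < w.
  have : 0 < Cz * w by apply: lt_trans Czw.
  by rewrite pmulr_rgt0.
have dlw : (Cz * expR N)^-1 < w.
  have : Cz^-1 * (expR N)^-1 < Cz^-1 * (Cz * w) by rewrite ltr_pM2l // invr_gt0.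
  by rewrite mulKf ?gt_eqF // => h; rewrite [(Cz * _)^-1]invfM.
split => //.
set m := 6 - 4 * s - q.
have m0 : 0 <= m by rewrite /m subr_ge0.
rewrite K3 // -/w.
have h1 : Tz z x `^ (4 * s) <= Cz `^ (4 * s) * w `^ (4 * s).
  rewrite -powRM; [|exact: ltW|exact: ltW]; apply: ge0_ler_powR => //. all: try by rewrite ?nnegrE ?mulr_ge0 // ltW.
  by rewrite nnegrE; apply: mulr_ge0; apply: ltW.
have wn0 : w != 0 by rewrite gt_eqF.
have h2 : w `^ (4 * s) * w `^ (- 6) = w `^ (- m) * w `^ (- q).
  rewrite -!powRD; try by apply/implyP.
  by congr (_ `^ _); rewrite /m; ring.
have h3 : w `^ (- m) <= (Cz * expR N) `^ m.
  have X0 : 0 < Cz * expR N by rewrite mulr_gt0.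
  have h : 1 <= (Cz * expR N * w) `^ m.
    rewrite -[X in X <= _](_ : 1 `^ m = 1); last by rewrite powR1.
    apply: ge0_ler_powR => //; rewrite ?nnegrE //.
    - by rewrite mulr_ge0 // ltW.
    have := dlw; rewrite -(ltr_pM2l X0) mulfV ?gt_eqF // => h; exact: ltW.
  rewrite powRM in h; [|by rewrite ltW|by rewrite ltW].
  rewrite powRN -[X in _ <= X]mulr1.
  have wm0 : 0 < w `^ m by rewrite powR_gt0.
  by rewrite mulr1 -[X in X <= _]mul1r ler_pdivrMr // mulrC.
apply: (le_trans (ler_wpM2r (powR_ge0 _ _) h1)).
rewrite -[X in X <= _]mulrA h2 [X in X <= _]mulrA.
apply: ler_wpM2r; first exact: powR_ge0.
apply: ler_wpM2l => //; exact: powR_ge0.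
Qed.


Lemma mainR (s : R) (hs1 : 1 < s) (hs2 : s < 3 / 2) :
  exists c1 : R, 0 < c1 /\
    forall z : cpx R, cabs z < 1 ->
      exists N0 : R, forall N : R, 1 <= N -> N0 <= N ->
        (`| JN1 s N z | <=
          (c1 * (1 + cabs z) ^+ 4 / (1 - cabs z) ^+ 4 * expR ((3 - 2 * s) * N))%:E)%E.
Proof.
exists 1; split => // z hz.
set q := Num.min (2 - s) (6 - 4 * s).
have q0 : 0 < q by rewrite /q lt_min; apply/andP; split; lra.
have q1 : q < 1 by rewrite /q gt_min; apply/orP; left; lra.
have qp : q <= 6 - 4 * s by rewrite /q ge_min; apply/orP; right.
set m := 6 - 4 * s - q.
set g := 3 - 2 * s - m.
have g0 : 0 < g.
  rewrite /g /m /q; case: (leP (2 - s) (6 - 4 * s)) => _; lra.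
have s0 : 0 < s by lra.
set a := cabs z.
have a0 : 0 <= a by exact: sqrtr_ge0.
set Cz := (1 + a) / (1 - a).
have Cz0 : 0 < Cz by rewrite /Cz divr_gt0 // ?subr_gt0 //; lra.
have Cq0 := Cq_ge0 q q1.
have pi0 : 0 < (pi : R)^-1 by rewrite invr_gt0 pi_gt0.
set K := pi^-1 * Cq q * (Cz `^ (4 * s) * Cz `^ m) / Cz ^+ 4.
have K0 : 0 <= K.
  apply: mulr_ge0; last by rewrite invr_ge0 exprn_ge0 // ltW.
  apply: mulr_ge0; last by apply: mulr_ge0; exact: powR_ge0.
  by apply: mulr_ge0 => //; exact: ltW.
exists (ln (K + 1) / g) => N _ hN.
set Mc := Cz `^ (4 * s) * (Cz * expR N) `^ m.
have Mc0 : 0 <= Mc by rewrite mulr_ge0 // powR_ge0.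
set dl := (Cz * expR N)^-1.
have dl0 : 0 < dl by rewrite invr_gt0 mulr_gt0 // expR_gt0.
have Fge0 : forall x : cpx R, (0 <= ((Tz z x) `^ (4 * s) * ((Kb x x).1) ^+ 3)%:E)%E.
  by move=> x; rewrite lee_fin mulr_ge0 ?powR_ge0 // exprn_ge0 // Kb1_ge0.
have Hint : (\int[@leb2 R]_(x in UN N z) ((Tz z x) `^ (4 * s) * ((Kb x x).1) ^+ 3)%:E
             <= (Mc * Cq q)%:E)%E.
  rewrite integral_mkcond.
  apply: (@le_trans _ _ (\int[@leb2 R]_x (Mc%:E * Gd dl q x))%E).
    apply: le_int_nm => x.
      by rewrite patchE; case: ifP => // _.
    rewrite patchE; case: ifPn => hx; last first.
      by apply: mule_ge0; [rewrite lee_fin | exact: Gd_ge0].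
    rewrite inE in hx.
    have [dlw bd] := integrand_bd s q N z x hz hx s0 q0 qp.
    rewrite /Gd ifT; last exact: dlw.
    by rewrite -EFinM lee_fin.
  rewrite ge0_integralZl //; [|exact: (mGd dl q)|by move=> x _; exact: Gd_ge0].
  have Mc0' : (0 <= Mc%:E)%E by rewrite lee_fin.
  rewrite EFinM; exact: (lee_wpmul2l Mc0' (intG dl q dl0 q0 q1)).
have J0 : (0 <= JN1 s N z)%E.
  rewrite /JN1 mule_ge0 //; first by rewrite lee_fin ltW.
  by apply: integral_ge0 => x _; exact: Fge0.
rewrite gee0_abs //.
apply: (@le_trans _ _ ((pi^-1)%:E * (Mc * Cq q)%:E)%E).
  have p0 : (0 <= (pi^-1)%:E :> \bar R)%E by rewrite lee_fin ltW.
  by rewrite /JN1; exact: (lee_wpmul2l p0 Hint).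
rewrite -EFinM lee_fin.
have eNm : expR N `^ m = expR (m * N).
  by rewrite /powR gt_eqF ?expR_gt0 // expRK mulrC.
have LHS : pi^-1 * (Mc * Cq q) = K * Cz ^+ 4 * expR (m * N).
  have Cz4 : Cz ^+ 4 != 0 by rewrite expf_neq0 // gt_eqF.
  rewrite /K divfK // /Mc powRM ?(ltW Cz0) ?(ltW (expR_gt0 N)) // eNm.
  ring.
have RHS : 1 * (1 + a) ^+ 4 / (1 - a) ^+ 4 * expR ((3 - 2 * s) * N)
         = Cz ^+ 4 * (expR (g * N) * expR (m * N)).
  by rewrite -expRD /Cz exprMn exprVn mul1r /g; congr (_ * expR _); ring.
rewrite LHS RHS mulrA; apply: ler_wpM2r; first exact: ltW (expR_gt0 _).
rewrite mulrC; apply: ler_wpM2l; first by rewrite exprn_ge0 // ltW.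
have hK : ln (K + 1) <= g * N by rewrite mulrC -ler_pdivrMr.
have K1 : 0 < K + 1 by lra.
apply: (@le_trans _ _ (K + 1)); first lra.
by rewrite -(lnK (x := K + 1)) ?posrE // ler_expR.
Qed.


End Aux.

Local Close Scope classical_set_scope.

Theorem lemma3p1 (R : realType) (s : R) (hs1 : 1 < s) (hs2 : s < 3 / 2) :
  exists c1 : R, 0 < c1 /\
    forall z : cpx R, cabs z < 1 ->
      exists N0 : R, forall N : R, 1 <= N -> N0 <= N ->
        (`| JN1 s N z | <=
          (c1 * (1 + cabs z) ^+ 4 / (1 - cabs z) ^+ 4 * expR ((3 - 2 * s) * N))%:E)%E.
Proof. exact: (@mainR R s hs1 hs2). Qed.
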